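(* Let $\xi>0$, $\alpha>0$, and consider, for $\sigma\ge0$, $\rho\ge0$, $y\in\mathbb{R}$, the system \[ \begin{aligned} \dot\sigma&=\sigma(-2+\rho\sigma+\rho^2)\left(y-\tfrac{\alpha}{\xi}\right)\bigl(1+O(\rho)\bigr),\\ \dot y&=\sigma+y\rho\sigma\left(y-\tfrac{\alpha}{\xi}\right)\bigl(1+O(\rho)\bigr),\\ \dot\rho&=\rho(2-\rho\sigma)\left(y-\tfrac{\alpha}{\xi}\right)\bigl(1+O(\rho)\bigr), \end{aligned} \] where the $O(\rho)$ terms are smooth functions vanishing at $\rho=0$. Then the planes $\{\rho=0\}$ and $\{\sigma=0\}$ are invariant and their intersection $\{\rho=\sigma=0\}$ is a line of fixed points. Moreover: (i) the origin $(\sigma,y,\rho)=(0,0,0)$ has the strong stable manifold $W^s(0,0,0)=\{\sigma=0,\ y=0,\ \rho\ge0\}$; (ii) there is a heteroclinic connection $\gamma^{2,4}=\{\sigma=\tfrac{2\alpha}{\xi}y-y^2,\ y\in(0,2\alpha/\xi),\ \rho=0\}$ joining $(0,0,0)$ backwards in time with $(\sigma,y,\rho)=(0,2\alpha/\xi,0)$ forward in time; (iii) the point $(0,2\alpha/\xi,0)$ has the strong unstable manifold $W^u(0,2\alpha/\xi,0)=\{\sigma=0,\ y=2\alpha/\xi,\ \rho\ge0\}$.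
   Context: This system is the flow on the attracting center manifold $x=-1-\alpha+O(r+q)$ of the system $\dot r=r^2q(y+\frac{x+1}{\xi})$, $\dot x=-(x+1+\alpha)+xrq(y+\frac{x+1}{\xi})$, $\dot y=r+yrq(y+\frac{x+1}{\xi})$, $\dot q=q^2(2-r)(y+\frac{x+1}{\xi})$, written in the blow-up coordinates $r=\rho\sigma$, $q=\rho$ and divided by $\rho$; the plane $\rho=0$ corresponds to the blown-up line $L_0=\{r=q=0,\ x=-1-\alpha\}$. *)

(* Defs.v *)
From Stdlib Require Import Reals.
From Coquelicot Require Import Coquelicot.
Open Scope R_scope.

Definition cont3 (f : R -> R -> R -> R) (a b c : R) : Prop :=
  continuous (fun p : R * R * R => f (fst (fst p)) (snd (fst p)) (snd p)) (a, b, c).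

Fixpoint Cn3 (n : nat) (f : R -> R -> R -> R) : Prop :=
  match n with
  | O => forall a b c, cont3 f a b c
  | S m => (forall a b c, cont3 f a b c) /\
      exists f1 f2 f3 : R -> R -> R -> R,
        (forall a b c, is_derive (fun t => f t b c) a (f1 a b c)) /\
        (forall a b c, is_derive (fun t => f a t c) b (f2 a b c)) /\
        (forall a b c, is_derive (fun t => f a b t) c (f3 a b c)) /\
        Cn3 m f1 /\ Cn3 m f2 /\ Cn3 m f3
  end.

Definition smooth3 (f : R -> R -> R -> R) : Prop := forall n, Cn3 n f.

(* The vector field in coordinates (sigma, y, rho); h1 h2 h3 are the O(rho)
   terms multiplying the three equations. *)
Definition F_sigma (al xi : R) (h1 : R -> R -> R -> R) (s y r : R) : R :=
  s * (-2 + r * s + r ^ 2) * (y - al / xi) * (1 + h1 s y r).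
Definition F_y (al xi : R) (h2 : R -> R -> R -> R) (s y r : R) : R :=
  s + y * r * s * (y - al / xi) * (1 + h2 s y r).
Definition F_rho (al xi : R) (h3 : R -> R -> R -> R) (s y r : R) : R :=
  r * (2 - r * s) * (y - al / xi) * (1 + h3 s y r).

Definition is_solution (al xi : R) (h1 h2 h3 : R -> R -> R -> R)
    (a b : Rbar) (s y r : R -> R) : Prop :=
  forall t : R, Rbar_lt a t -> Rbar_lt t b ->
    is_derive s t (F_sigma al xi h1 (s t) (y t) (r t)) /\
    is_derive y t (F_y al xi h2 (s t) (y t) (r t)) /\
    is_derive r t (F_rho al xi h3 (s t) (y t) (r t)).

Definition in_U (d p1 p2 p3 s y r : R) : Prop :=
  0 <= s /\ 0 <= r /\ Rabs (s - p1) < d /\ Rabs (y - p2) < d /\ Rabs (r - p3) < d.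

Definition loc_stable_set (al xi : R) (h1 h2 h3 : R -> R -> R -> R)
    (d p1 p2 p3 q1 q2 q3 : R) : Prop :=
  exists (a : R) (s y r : R -> R),
    a < 0 /\ is_solution al xi h1 h2 h3 (Finite a) p_infty s y r /\
    s 0 = q1 /\ y 0 = q2 /\ r 0 = q3 /\
    (forall t, 0 <= t -> in_U d p1 p2 p3 (s t) (y t) (r t)) /\
    is_lim s p_infty p1 /\ is_lim y p_infty p2 /\ is_lim r p_infty p3.

Definition loc_unstable_set (al xi : R) (h1 h2 h3 : R -> R -> R -> R)
    (d p1 p2 p3 q1 q2 q3 : R) : Prop :=
  exists (b : R) (s y r : R -> R),
    0 < b /\ is_solution al xi h1 h2 h3 m_infty (Finite b) s y r /\
    s 0 = q1 /\ y 0 = q2 /\ r 0 = q3 /\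
    (forall t, t <= 0 -> in_U d p1 p2 p3 (s t) (y t) (r t)) /\
    is_lim s m_infty p1 /\ is_lim y m_infty p2 /\ is_lim r m_infty p3.

(* Main.v *)
Require Import Defs.
From Stdlib Require Import Reals Lra ClassicalEpsilon.
From Stdlib Require Ranalysis5.
From Coquelicot Require Import Coquelicot.
Open Scope R_scope.

Lemma inv_cont (T g : R -> R) (t0 lo hi d0 : R) :
  0 < d0 ->
  (forall t, Rabs (t - t0) < d0 -> lo < g t < hi /\ T (g t) = t) ->
  (forall x1 x2, lo < x1 -> x1 < x2 -> x2 < hi -> T x2 < T x1) ->
  forall e, 0 < e -> exists d, 0 < d /\ d <= d0 /\
    forall t, Rabs (t - t0) < d -> Rabs (g t - g t0) < e.
Proof.
  intros Hd0 Hinv Hdec e He.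
  destruct (Hinv t0) as [[Hl Hh] HT0]. rewrite Rminus_diag, Rabs_R0; auto.
  set (x0 := g t0) in *.
  set (e' := Rmin e (Rmin ((x0 - lo)/2) ((hi - x0)/2))).
  assert (He'1 : 0 < e').
  { unfold e'. repeat apply Rmin_pos; lra. }
  assert (He'2 : e' <= e) by apply Rmin_l.
  assert (He'3 : e' <= (x0 - lo)/2) by (unfold e'; eapply Rle_trans; [apply Rmin_r|apply Rmin_l]).
  assert (He'4 : e' <= (hi - x0)/2) by (unfold e'; eapply Rle_trans; [apply Rmin_r|apply Rmin_r]).
  assert (A1 : T (x0 + e') < t0). { rewrite <- HT0. apply Hdec; lra. }
  assert (A2 : t0 < T (x0 - e')). { rewrite <- HT0 at 1. apply Hdec; lra. }
  exists (Rmin d0 (Rmin (t0 - T (x0 + e')) (T (x0 - e') - t0))).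
  split. { repeat apply Rmin_pos; lra. }
  split. { apply Rmin_l. }
  intros t Ht.
  assert (B1 : Rabs (t - t0) < d0) by (eapply Rlt_le_trans; [exact Ht|apply Rmin_l]).
  assert (B2 : Rabs (t - t0) < t0 - T (x0 + e')) by
    (eapply Rlt_le_trans; [exact Ht|eapply Rle_trans; [apply Rmin_r|apply Rmin_l]]).
  assert (B3 : Rabs (t - t0) < T (x0 - e') - t0) by
    (eapply Rlt_le_trans; [exact Ht|eapply Rle_trans; [apply Rmin_r|apply Rmin_r]]).
  destruct (Hinv t B1) as [[C1 C2] C3].
  apply Rabs_def2 in B2. apply Rabs_def2 in B3.
  apply Rabs_def1.
  - destruct (Rlt_or_le (g t - x0) e') as [L|L]. lra.
    exfalso. destruct (Req_dec (g t) (x0 + e')) as [E|E].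
    + rewrite E in C3. lra.
    + assert (T (g t) < T (x0 + e')) by (apply Hdec; lra). lra.
  - destruct (Rlt_or_le (-e') (g t - x0)) as [L|L]. lra.
    exfalso. destruct (Req_dec (g t) (x0 - e')) as [E|E].
    + rewrite E in C3. lra.
    + assert (T (x0 - e') < T (g t)) by (apply Hdec; lra). lra.
Qed.

Lemma inv_deriv (T g : R -> R) (t0 lo hi d0 l : R) :
  0 < d0 ->
  (forall t, Rabs (t - t0) < d0 -> lo < g t < hi /\ T (g t) = t) ->
  (forall x1 x2, lo < x1 -> x1 < x2 -> x2 < hi -> T x2 < T x1) ->
  is_derive T (g t0) l -> l <> 0 ->
  is_derive g t0 (1 / l).
Proof.
  intros Hd0 Hinv Hdec HT Hl.
  apply is_derive_Reals in HT. apply is_derive_Reals.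
  intros eps Heps.
  assert (Hla : 0 < Rabs l) by (apply Rabs_pos_lt; auto).
  set (e := Rmin (Rabs l / 2) (eps * (Rabs l * Rabs l) / 2)).
  assert (He : 0 < e).
  { unfold e. apply Rmin_pos. lra. apply Rmult_lt_0_compat; [|lra].
    apply Rmult_lt_0_compat; auto. apply Rmult_lt_0_compat; auto. }
  destruct (HT e He) as [d1 Hd1].
  destruct (inv_cont T g t0 lo hi d0 Hd0 Hinv Hdec d1 (cond_pos d1)) as [d2 [Hd2 [Hd2' Hg]]].
  exists (mkposreal d2 Hd2). simpl. intros h Hh0 Hh.
  destruct (Hinv t0) as [_ HT0]. rewrite Rminus_diag, Rabs_R0; auto.
  set (x0 := g t0) in *.
  set (k := g (t0 + h) - x0).
  assert (Hk : Rabs k < d1). { unfold k. apply Hg. replace (t0 + h - t0) with h by ring. auto. }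
  destruct (Hinv (t0 + h)) as [_ HTh]. replace (t0 + h - t0) with h by ring. lra.
  assert (Hxk : x0 + k = g (t0 + h)) by (unfold k; ring).
  assert (Hk0 : k <> 0).
  { intro E. rewrite E, Rplus_0_r in Hxk. rewrite <- Hxk in HTh. lra. }
  specialize (Hd1 k Hk0 Hk). rewrite Hxk, HTh, HT0 in Hd1.
  replace (t0 + h - t0) with h in Hd1 by ring.
  set (Q := h / k) in *.
  assert (HQ0 : Q <> 0). { unfold Q. unfold Rdiv. apply Rmult_integral_contrapositive_currified; auto. apply Rinv_neq_0_compat; auto. }
  replace (k / h - 1 / l) with ((l - Q) / (Q * l)).
  2: { unfold Q. field. auto. }
  assert (E1 : Rabs (Q - l) < Rabs l / 2) by (eapply Rlt_le_trans; [exact Hd1|apply Rmin_l]).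
  assert (E2 : Rabs (Q - l) < eps * (Rabs l * Rabs l) / 2) by (eapply Rlt_le_trans; [exact Hd1|apply Rmin_r]).
  assert (E3 : Rabs l / 2 <= Rabs Q).
  { assert (Rabs l - Rabs Q <= Rabs (l - Q)) by apply Rabs_triang_inv.
    rewrite Rabs_minus_sym in E1. lra. }
  unfold Rdiv. rewrite Rabs_mult, Rabs_inv, Rabs_mult.
  assert (P : 0 < Rabs Q * Rabs l) by (apply Rmult_lt_0_compat; lra).
  apply Rmult_lt_reg_r with (Rabs Q * Rabs l). auto.
  rewrite Rmult_assoc, Rinv_l by lra. rewrite Rmult_1_r.
  rewrite Rabs_minus_sym in E2.
  assert (Rabs l * Rabs l / 2 <= Rabs Q * Rabs l).
  { replace (Rabs l * Rabs l / 2) with ((Rabs l / 2) * Rabs l) by field.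
    apply Rmult_le_compat_r; lra. }
  assert (eps * (Rabs l * Rabs l / 2) <= eps * (Rabs Q * Rabs l)) by (apply Rmult_le_compat_l; lra).
  lra.
Qed.

Lemma is_derive_eq (f : R -> R) (x l l' : R) : is_derive f x l -> l = l' -> is_derive f x l'.
Proof. intros H ->; exact H. Qed.

Lemma der_cont (f : R -> R) (x l : R) : is_derive f x l -> continuity_pt f x.
Proof.
  intros H. apply continuity_pt_filterlim.
  apply (ex_derive_continuous (K:=R_AbsRing) (V:=R_NormedModule)). exists l; exact H.
Qed.

Lemma der_sq_exp (u : R -> R) du K t0 x : is_derive u x du ->
  is_derive (fun x => u x ^ 2 * exp (K * (x - t0))) x
    (2 * u x * du * exp (K * (x - t0)) + u x ^ 2 * (K * exp (K * (x - t0)))).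
Proof.
  intros H.
  eapply is_derive_eq.
  - apply (is_derive_mult (fun x => u x ^ 2) (fun x => exp (K * (x - t0)))).
    + apply (is_derive_pow u 2 x du H).
    + apply (is_derive_comp exp (fun x => K * (x - t0)) x (exp (K * (x - t0))) K).
      * apply is_derive_exp.
      * auto_derive. auto. ring.
    + intros; apply Rmult_comm.
  - simpl. unfold plus, mult, scal; simpl. unfold mult; simpl. ring.
Qed.

Lemma Rbar_in_seg (a b : Rbar) (t0 t c : R) : Rbar_lt a t0 -> Rbar_lt t0 b ->
  Rbar_lt a t -> Rbar_lt t b -> Rmin t0 t <= c <= Rmax t0 t ->
  Rbar_lt a c /\ Rbar_lt c b.
Proof.
  intros H1 H2 H3 H4 [H5 H6].
  assert (Hm : Rmin t0 t = t0 \/ Rmin t0 t = t) by (unfold Rmin; destruct Rle_dec; auto).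
  assert (HM : Rmax t0 t = t0 \/ Rmax t0 t = t) by (unfold Rmax; destruct Rle_dec; auto).
  assert (c >= t0 \/ c >= t) by (destruct Hm as [Hm|Hm]; rewrite Hm in H5; lra).
  assert (c <= t0 \/ c <= t) by (destruct HM as [HM|HM]; rewrite HM in H6; lra).
  split.
  - destruct a as [a| |]; simpl in *; auto. destruct H; lra.
  - destruct b as [b| |]; simpl in *; auto. destruct H0; lra.
Qed.

Lemma lin_zero (u G : R -> R) (a b : Rbar) (t0 : R) :
 (forall t : R, Rbar_lt a t -> Rbar_lt t b -> is_derive u t (u t * G t)) ->
 (forall t : R, Rbar_lt a t -> Rbar_lt t b -> continuity_pt G t) ->
 Rbar_lt a t0 -> Rbar_lt t0 b -> u t0 = 0 ->
 forall t : R, Rbar_lt a t -> Rbar_lt t b -> u t = 0.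
Proof.
  intros Hd Hc Ha0 Hb0 Hu0 t Ha Hb.
  assert (Hseg := Rbar_in_seg a b t0 t).
  destruct (continuity_ab_maj (fun x => Rabs (G x)) (Rmin t0 t) (Rmax t0 t)) as [Mx [HM _]].
  { apply Rle_trans with t0. apply Rmin_l. apply Rmax_l. }
  { intros c Hc'. destruct (Hseg c Ha0 Hb0 Ha Hb Hc') as [A B].
    apply (continuity_pt_comp G Rabs). apply Hc; auto. apply Rcontinuity_abs. }
  set (M := Rabs (G Mx)).
  assert (HGM : forall c, Rmin t0 t <= c <= Rmax t0 t -> - M <= G c <= M).
  { intros c Hc'. apply Rabs_le_between. apply (HM c Hc'). }
  assert (Hcont : forall K c, Rmin t0 t <= c <= Rmax t0 t ->
     continuity_pt (fun x => u x ^ 2 * exp (K * (x - t0))) c).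
  { intros K c Hc'. destruct (Hseg c Ha0 Hb0 Ha Hb Hc') as [A B].
    eapply der_cont. apply der_sq_exp. apply Hd; auto. }
  assert (Hsq : u t ^ 2 = 0 -> u t = 0).
  { intros H. apply Rsqr_0_uniq. unfold Rsqr. rewrite <- H. ring. }
  apply Hsq.
  destruct (Rle_lt_dec t0 t) as [Hle|Hlt].
  - set (K := -2 * M).
    destruct (MVT_gen (fun x => u x ^ 2 * exp (K * (x - t0))) t0 t
      (fun x => 2 * u x * (u x * G x) * exp (K * (x - t0)) + u x ^ 2 * (K * exp (K * (x - t0)))))
      as [c [Hc' Heq]].
    { intros x Hx. apply der_sq_exp. destruct (Hseg x Ha0 Hb0 Ha Hb) as [A B].
      lra. apply Hd; auto. }
    { intros x Hx. apply Hcont; auto. }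
    rewrite Hu0 in Heq.
    assert (E1 : 0 < exp (K * (t - t0))) by apply exp_pos.
    assert (E2 : 0 < exp (K * (c - t0))) by apply exp_pos.
    assert (Hg := HGM c Hc').
    assert (P : 2 * u c * (u c * G c) * exp (K * (c - t0)) + u c ^ 2 * (K * exp (K * (c - t0)))
       = 2 * (u c ^ 2 * exp (K * (c - t0))) * (G c - M)) by (unfold K; ring).
    rewrite P in Heq.
    assert (Q : 0 <= u c ^ 2 * exp (K * (c - t0))).
    { apply Rmult_le_pos. apply pow2_ge_0. lra. }
    assert (Q2 : 0 <= u t ^ 2) by apply pow2_ge_0.
    assert (R1 : 2 * (u c ^ 2 * exp (K * (c - t0))) * (G c - M) * (t - t0) <= 0).
    { assert (0 <= 2 * (u c ^ 2 * exp (K * (c - t0))) * (M - G c) * (t - t0)).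
      { apply Rmult_le_pos; [apply Rmult_le_pos; [apply Rmult_le_pos; lra|lra]|lra]. } lra. }
    assert (u t ^ 2 * exp (K * (t - t0)) <= 0).
    { replace (0 ^ 2 * exp (K * (t0 - t0))) with 0 in Heq by ring. lra. }
    assert (u t ^ 2 * exp (K * (t - t0)) >= 0).
    { apply Rle_ge, Rmult_le_pos; lra. }
    assert (u t ^ 2 * exp (K * (t - t0)) = 0) by lra.
    apply Rmult_integral in H1. destruct H1; auto. lra.
  - set (K := 2 * M).
    destruct (MVT_gen (fun x => u x ^ 2 * exp (K * (x - t0))) t0 t
      (fun x => 2 * u x * (u x * G x) * exp (K * (x - t0)) + u x ^ 2 * (K * exp (K * (x - t0)))))
      as [c [Hc' Heq]].
    { intros x Hx. apply der_sq_exp. destruct (Hseg x Ha0 Hb0 Ha Hb) as [A B].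
      lra. apply Hd; auto. }
    { intros x Hx. apply Hcont; auto. }
    rewrite Hu0 in Heq.
    assert (E1 : 0 < exp (K * (t - t0))) by apply exp_pos.
    assert (E2 : 0 < exp (K * (c - t0))) by apply exp_pos.
    assert (Hg := HGM c Hc').
    assert (P : 2 * u c * (u c * G c) * exp (K * (c - t0)) + u c ^ 2 * (K * exp (K * (c - t0)))
       = 2 * (u c ^ 2 * exp (K * (c - t0))) * (G c + M)) by (unfold K; ring).
    rewrite P in Heq.
    assert (Q : 0 <= u c ^ 2 * exp (K * (c - t0))).
    { apply Rmult_le_pos. apply pow2_ge_0. lra. }
    assert (Q2 : 0 <= u t ^ 2) by apply pow2_ge_0.
    assert (R1 : 2 * (u c ^ 2 * exp (K * (c - t0))) * (G c + M) * (t - t0) <= 0).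
    { assert (0 <= 2 * (u c ^ 2 * exp (K * (c - t0))) * (G c + M) * (t0 - t)).
      { apply Rmult_le_pos; [apply Rmult_le_pos; [apply Rmult_le_pos; lra|lra]|lra]. } lra. }
    assert (u t ^ 2 * exp (K * (t - t0)) <= 0).
    { replace (0 ^ 2 * exp (K * (t0 - t0))) with 0 in Heq by ring. lra. }
    assert (u t ^ 2 * exp (K * (t - t0)) >= 0).
    { apply Rle_ge, Rmult_le_pos; lra. }
    assert (u t ^ 2 * exp (K * (t - t0)) = 0) by lra.
    apply Rmult_integral in H1. destruct H1; auto. lra.
Qed.
Lemma ballR (x y e : R) : Rabs (y - x) < e -> ball x e y.
Proof. intros H. exact H. Qed.
Lemma ballR' (x y e : R) : ball x e y -> Rabs (y - x) < e.
Proof. intros H. exact H. Qed.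

Lemma cont3_ed f a b c : cont3 f a b c -> forall eps, 0 < eps ->
  exists del, 0 < del /\ forall x y z, Rabs (x-a) < del -> Rabs (y-b) < del ->
   Rabs (z-c) < del -> Rabs (f x y z - f a b c) < eps.
Proof.
  intros H eps He.
  unfold cont3, continuous in H.
  apply filterlim_locally with (eps := mkposreal eps He) in H.
  destruct H as [d Hd].
  exists d. split. apply cond_pos.
  intros x y z H1 H2 H3.
  apply (Hd ((x,y),z)). split; [split|]; apply ballR; auto.
Qed.

Lemma cont_comp3 (h : R -> R -> R -> R) (s y r : R -> R) (t : R) :
  (forall a b c, cont3 h a b c) -> continuity_pt s t -> continuity_pt y t -> continuity_pt r t ->
  continuity_pt (fun t => h (s t) (y t) (r t)) t.
Proof.
  intros Hh Hs Hy Hr. apply continuity_pt_locally. intros eps.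
  destruct (cont3_ed h (s t) (y t) (r t) (Hh _ _ _) eps (cond_pos eps)) as [d [Hd HH]].
  apply continuity_pt_locally with (eps := mkposreal d Hd) in Hs.
  apply continuity_pt_locally with (eps := mkposreal d Hd) in Hy.
  apply continuity_pt_locally with (eps := mkposreal d Hd) in Hr.
  generalize (filter_and _ _ Hs (filter_and _ _ Hy Hr)).
  apply filter_imp. intros u [A [B C]]. apply HH; assumption.
Qed.

Lemma smooth_cont (h : R -> R -> R -> R) : smooth3 h -> forall a b c, cont3 h a b c.
Proof. intros H. exact (H O). Qed.

Lemma sol_cont al xi h1 h2 h3 a b s y r (t : R) :
  is_solution al xi h1 h2 h3 a b s y r -> Rbar_lt a t -> Rbar_lt t b ->
  continuity_pt s t /\ continuity_pt y t /\ continuity_pt r t.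
Proof.
  intros H Ha Hb. destruct (H t Ha Hb) as [A [B C]].
  split; [|split]; eapply der_cont; eassumption.
Qed.

Lemma inv_rho al xi h1 h2 h3 :
  smooth3 h1 -> smooth3 h2 -> smooth3 h3 ->
  (forall (a b : Rbar) (s y r : R -> R) (t0 : R),
     is_solution al xi h1 h2 h3 a b s y r ->
     Rbar_lt a t0 -> Rbar_lt t0 b -> r t0 = 0 ->
     forall t : R, Rbar_lt a t -> Rbar_lt t b -> r t = 0).
Proof.
  intros S1 S2 S3 a b s y r t0 Hsol.
  apply (lin_zero r (fun t => (2 - r t * s t) * (y t - al / xi) * (1 + h3 (s t) (y t) (r t)))).
  - intros t Ha Hb. destruct (Hsol t Ha Hb) as [_ [_ C]].
    eapply is_derive_eq. exact C. unfold F_rho. ring.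
  - intros t Ha Hb. destruct (sol_cont _ _ _ _ _ _ _ _ _ _ t Hsol Ha Hb) as [A [B C]].
    repeat apply continuity_pt_mult.
    + apply continuity_pt_minus. apply continuity_pt_const; intro; auto.
      apply continuity_pt_mult; auto.
    + apply continuity_pt_minus. auto. apply continuity_pt_const; intro; auto.
    + apply continuity_pt_plus. apply continuity_pt_const; intro; auto.
      apply cont_comp3; auto. apply smooth_cont; auto.
Qed.

Lemma inv_sigma al xi h1 h2 h3 :
  smooth3 h1 -> smooth3 h2 -> smooth3 h3 ->
  (forall (a b : Rbar) (s y r : R -> R) (t0 : R),
     is_solution al xi h1 h2 h3 a b s y r ->
     Rbar_lt a t0 -> Rbar_lt t0 b -> s t0 = 0 ->
     forall t : R, Rbar_lt a t -> Rbar_lt t b -> s t = 0).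
Proof.
  intros S1 S2 S3 a b s y r t0 Hsol.
  apply (lin_zero s (fun t => (-2 + r t * s t + r t * r t) * (y t - al / xi) * (1 + h1 (s t) (y t) (r t)))).
  - intros t Ha Hb. destruct (Hsol t Ha Hb) as [C _].
    eapply is_derive_eq. exact C. unfold F_sigma. ring.
  - intros t Ha Hb. destruct (sol_cont _ _ _ _ _ _ _ _ _ _ t Hsol Ha Hb) as [A [B C]].
    repeat apply continuity_pt_mult.
    + apply continuity_pt_plus. apply continuity_pt_plus. apply continuity_pt_const; intro; auto.
      apply continuity_pt_mult; auto. apply continuity_pt_mult; auto.
    + apply continuity_pt_minus. auto. apply continuity_pt_const; intro; auto.
    + apply continuity_pt_plus. apply continuity_pt_const; intro; auto.
      apply cont_comp3; auto. apply smooth_cont; auto.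
Qed.



Lemma ode_decay (phi : R -> R) (D q m M : R) :
  0 < m -> 0 < q -> q < D ->
  (forall u, 0 < u < D -> m <= phi u <= M) ->
  (forall u, 0 < u < D -> continuity_pt phi u) ->
  exists (a : R) (rho : R -> R), a < 0 /\ rho 0 = q /\
   (forall t, a < t -> is_derive rho t (- (rho t * phi (rho t)))) /\
   (forall t, 0 <= t -> 0 < rho t <= q) /\
   is_lim rho p_infty 0.
Proof.
  intros Hm Hq HqD Hb Hc.
  set (f := fun u => / (u * phi u)).
  assert (Lf_cont : forall u, 0 < u < D -> continuous f u).
  { intros u Hu. apply continuity_pt_filterlim. unfold f.
    apply (continuity_pt_inv (fun u => u * phi u)).
    apply continuity_pt_mult. apply derivable_continuous_pt, derivable_pt_id. apply Hc; auto.
    assert (m <= phi u) by (apply Hb; auto).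
    apply Rgt_not_eq. apply Rmult_lt_0_compat; lra. }
  assert (Lf_pos : forall u, 0 < u < D -> 0 < f u /\ / (M * u) <= f u).
  { intros u Hu. destruct (Hb u Hu) as [B1 B2]. unfold f. split.
    apply Rinv_0_lt_compat, Rmult_lt_0_compat; lra.
    apply Rinv_le_contravar. apply Rmult_lt_0_compat; lra.
    rewrite (Rmult_comm u). apply Rmult_le_compat_r; lra. }
  assert (Lex : forall x1 x2, 0 < x1 < D -> 0 < x2 < D -> ex_RInt f x1 x2).
  { intros x1 x2 H1 H2. apply (ex_RInt_continuous (V:=R_CompleteNormedModule)). intros z Hz. apply Lf_cont.
    assert (Rmin x1 x2 = x1 \/ Rmin x1 x2 = x2) by (unfold Rmin; destruct Rle_dec; auto).
    assert (Rmax x1 x2 = x1 \/ Rmax x1 x2 = x2) by (unfold Rmax; destruct Rle_dec; auto).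
    destruct H as [H|H]; rewrite H in Hz; destruct H0 as [H0|H0]; rewrite H0 in Hz; lra. }
  set (T := fun x : R => (RInt f x q : R)).
  assert (LT_der : forall x, 0 < x < D -> is_derive T x (- f x)).
  { intros x Hx. eapply is_derive_eq. apply (is_derive_RInt' f T x q).
    - assert (Hd : 0 < Rmin x (D - x)) by (apply Rmin_pos; lra).
      exists (mkposreal _ Hd). intros a0 Ha0.
      change (Rabs (a0 - x) < Rmin x (D - x)) in Ha0.
      assert (Rmin x (D - x) <= x) by apply Rmin_l.
      assert (Rmin x (D - x) <= D - x) by apply Rmin_r.
      apply Rabs_def2 in Ha0.
      unfold T. apply (RInt_correct (V:=R_CompleteNormedModule)). apply Lex; lra.
    - apply Lf_cont; auto.
    - reflexivity. }
  assert (LT_dec : forall x1 x2, 0 < x1 -> x1 < x2 -> x2 < D -> T x2 < T x1).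
  { intros x1 x2 H1 H2 H3. unfold T.
    rewrite <- (RInt_Chasles f x1 x2 q). 2,3: apply Lex; lra.
    assert (0 < RInt f x1 x2).
    { apply RInt_gt_0; auto. intros; apply Lf_pos; lra. intros; apply Lf_cont; lra. }
    change (plus (RInt f x1 x2) (RInt f x2 q)) with (RInt f x1 x2 + RInt f x2 q). lra. }
  assert (LT_q : T q = 0). { unfold T. apply (RInt_point (V:=R_CompleteNormedModule)). }
  assert (LT_ln : forall x, 0 < x <= q -> (ln q - ln x) / M <= T x).
  { intros x Hx. destruct (Req_dec x q) as [E|E].
    { rewrite E, LT_q. unfold Rminus. rewrite Rplus_opp_r. unfold Rdiv. rewrite Rmult_0_l. lra. }
    assert (HM : 0 < M) by (destruct (Hb q); lra).
    assert (Hi : is_RInt (fun u => / (M * u)) x q ((ln q - ln x) / M)).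
    { replace ((ln q - ln x) / M) with (minus (ln q / M) (ln x / M)).
      2: { unfold minus, plus, opp; simpl. field. lra. }
      apply (is_RInt_derive (fun u => ln u / M)).
      - intros z Hz. rewrite Rmin_left, Rmax_right in Hz by lra.
        auto_derive. lra. field. split; lra.
      - intros z Hz. rewrite Rmin_left, Rmax_right in Hz by lra.
        apply continuity_pt_filterlim.
        apply (continuity_pt_inv (fun u => M * u)).
        apply continuity_pt_mult. apply continuity_pt_const; intro; auto.
        apply derivable_continuous_pt, derivable_pt_id.
        apply Rgt_not_eq. apply Rmult_lt_0_compat; lra. }
    rewrite <- (is_RInt_unique _ _ _ _ Hi). unfold T.
    apply RInt_le. lra. eexists; exact Hi. apply Lex; lra.
    intros z Hz. apply Lf_pos. lra. }
  set (D' := (q + D) / 2).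
  assert (HD' : q < D' < D) by (unfold D'; lra).
  assert (LTD' : T D' < 0). { rewrite <- LT_q. apply LT_dec; lra. }
  assert (Lexist : forall t, T D' < t -> exists x, 0 < x <= D' /\ T x = t).
  { intros t Ht.
    set (x0 := q * exp (-(M * (Rabs t + 1)))).
    assert (HM : 0 < M) by (destruct (Hb q); lra).
    assert (Hx0 : 0 < x0 < q).
    { unfold x0. split. apply Rmult_lt_0_compat; auto. apply exp_pos.
      rewrite <- (Rmult_1_r q) at 2. apply Rmult_lt_compat_l; auto.
      assert (0 <= Rabs t) by apply Rabs_pos.
      assert (0 < M * (Rabs t + 1)) by (apply Rmult_lt_0_compat; lra).
      assert (exp (-(M * (Rabs t + 1))) < exp 0) by (apply exp_increasing; lra).
      rewrite exp_0 in H1. exact H1. }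
    assert (HT0 : t < T x0).
    { eapply Rlt_le_trans. 2: apply LT_ln; lra.
      unfold x0. rewrite ln_mult, ln_exp. 2: auto. 2: apply exp_pos.
      replace ((ln q - (ln q + - (M * (Rabs t + 1)))) / M) with (Rabs t + 1) by (field; lra).
      assert (t <= Rabs t) by apply RRle_abs. lra. }
    destruct (Ranalysis5.IVT_interv (fun x => t - T x) x0 D') as [z [[Hz1 Hz2] Hz3]].
    - intros a0 Ha0. apply continuity_pt_minus. apply continuity_pt_const; intro; auto.
      eapply der_cont. apply LT_der. lra.
    - lra.
    - lra.
    - lra.
    - exists z. split. lra. lra. }
  set (rho := fun t => epsilon (inhabits 0) (fun x => 0 < x <= D' /\ T x = t)).
  assert (Lrho : forall t, T D' < t -> (0 < rho t <= D') /\ T (rho t) = t).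
  { intros t Ht. unfold rho. apply epsilon_spec. apply Lexist; auto. }
  assert (Luniq : forall x1 x2, 0 < x1 <= D' -> 0 < x2 <= D' -> T x1 = T x2 -> x1 = x2).
  { intros x1 x2 H1 H2 E. destruct (Rtotal_order x1 x2) as [L|[L|L]]; auto.
    - assert (T x2 < T x1) by (apply LT_dec; lra). lra.
    - assert (T x1 < T x2) by (apply LT_dec; lra). lra. }
  assert (Lrho_lt : forall t, T D' < t -> rho t < D').
  { intros t Ht. destruct (Lrho t Ht) as [[A B] C].
    destruct B as [B|B]; auto. rewrite B in C. lra. }
  exists (T D' / 2), rho. split. lra. split.
  { apply Luniq. apply Lrho; lra. lra. rewrite LT_q. apply Lrho; lra. }
  split.
  { intros t Ht. assert (Ht' : T D' < t) by lra.
    destruct (Lrho t Ht') as [[A _] _].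
    assert (Ar := Lrho_lt t Ht').
    assert (Hphi : m <= phi (rho t)) by (apply Hb; lra).
    eapply is_derive_eq.
    apply (inv_deriv T rho t 0 D' (t - T D') (- f (rho t))).
    - lra.
    - intros t' Ht'2. apply Rabs_def2 in Ht'2.
      destruct (Lrho t') as [[B1 _] B2]. lra.
      split; auto. split; auto. apply Lrho_lt; lra.
    - intros; apply LT_dec; lra.
    - apply LT_der; lra.
    - assert (0 < f (rho t)) by (apply Lf_pos; lra). lra.
    - unfold f. field. split; lra. }
  split.
  { intros t Ht. destruct (Lrho t) as [[A B] C]. lra. split; auto.
    destruct (Rle_lt_dec (rho t) q) as [L|L]; auto.
    assert (T (rho t) < T q) by (apply LT_dec; lra). lra. }
  apply is_lim_spec. intros eps. simpl.
  set (e' := Rmin eps q).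
  assert (He' : 0 < e' <= q) by (split; [apply Rmin_pos; [apply cond_pos|lra]|apply Rmin_r]).
  exists (Rmax 0 (T e')). intros t Ht.
  assert (Ht1 : 0 < t) by (eapply Rle_lt_trans; [apply Rmax_l|exact Ht]).
  assert (Ht2 : T e' < t) by (eapply Rle_lt_trans; [apply Rmax_r|exact Ht]).
  destruct (Lrho t) as [[A B] C]. lra.
  assert (rho t < e').
  { destruct (Rlt_or_le (rho t) e') as [L|L]; auto. exfalso.
    destruct (Req_dec (rho t) e') as [E|E].
    - rewrite E in C. lra.
    - assert (T (rho t) < T e') by (apply LT_dec; lra). lra. }
  assert (e' <= eps) by apply Rmin_l.
  rewrite Rminus_0_r, Rabs_right by lra. lra.
Qed.

Lemma lim_p_ge (g : R -> R) (c L : R) : (forall t, 0 <= t -> c <= g t) ->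
  is_lim g p_infty L -> c <= L.
Proof.
  intros H Hl. destruct (Rle_or_lt c L) as [E|E]; auto. exfalso.
  apply is_lim_spec in Hl. assert (He : 0 < (c - L) / 2) by lra.
  destruct (Hl (mkposreal _ He)) as [M HM]. simpl in HM.
  set (t := Rmax 0 M + 1).
  assert (0 <= t) by (unfold t; generalize (Rmax_l 0 M); lra).
  assert (M < t) by (unfold t; generalize (Rmax_r 0 M); lra).
  specialize (HM t H1). specialize (H t H0). apply Rabs_def2 in HM. lra.
Qed.

Lemma lim_p_eq (g : R -> R) (c L : R) : (forall t, 0 <= t -> g t = c) ->
  is_lim g p_infty L -> c = L.
Proof.
  intros H Hl. apply Rle_antisym.
  - apply (lim_p_ge g c L); auto. intros t Ht; rewrite H; lra.
  - apply Ropp_le_cancel. apply (lim_p_ge (fun t => - g t) (- c) (- L)).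
    intros t Ht; rewrite H; lra.
    apply (is_lim_opp g p_infty L). auto.
Qed.

Lemma lim_m_ge (g : R -> R) (c L : R) : (forall t, t <= 0 -> c <= g t) ->
  is_lim g m_infty L -> c <= L.
Proof.
  intros H Hl. destruct (Rle_or_lt c L) as [E|E]; auto. exfalso.
  apply is_lim_spec in Hl. assert (He : 0 < (c - L) / 2) by lra.
  destruct (Hl (mkposreal _ He)) as [M HM]. simpl in HM.
  set (t := Rmin 0 M - 1).
  assert (t <= 0) by (unfold t; generalize (Rmin_l 0 M); lra).
  assert (t < M) by (unfold t; generalize (Rmin_r 0 M); lra).
  specialize (HM t H1). specialize (H t H0). apply Rabs_def2 in HM. lra.
Qed.

Lemma lim_m_eq (g : R -> R) (c L : R) : (forall t, t <= 0 -> g t = c) ->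
  is_lim g m_infty L -> c = L.
Proof.
  intros H Hl. apply Rle_antisym.
  - apply (lim_m_ge g c L); auto. intros t Ht; rewrite H; lra.
  - apply Ropp_le_cancel. apply (lim_m_ge (fun t => - g t) (- c) (- L)).
    intros t Ht; rewrite H; lra.
    apply (is_lim_opp g m_infty L). auto.
Qed.

Lemma mono_p (g G : R -> R) : (forall t, 0 <= t -> is_derive g t (G t)) ->
  (forall t, 0 <= t -> 0 <= G t) -> forall t, 0 <= t -> g 0 <= g t.
Proof.
  intros Hd HG t Ht.
  destruct (MVT_gen g 0 t G) as [c [Hc E]].
  - intros x Hx. rewrite Rmin_left, Rmax_right in Hx by lra. apply Hd; lra.
  - intros x Hx. rewrite Rmin_left, Rmax_right in Hx by lra. eapply der_cont. apply Hd; lra.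
  - rewrite Rmin_left, Rmax_right in Hc by lra.
    assert (0 <= G c * (t - 0)) by (apply Rmult_le_pos; [apply HG; lra|lra]). lra.
Qed.

Lemma mono_m (g G : R -> R) : (forall t, t <= 0 -> is_derive g t (G t)) ->
  (forall t, t <= 0 -> G t <= 0) -> forall t, t <= 0 -> g 0 <= g t.
Proof.
  intros Hd HG t Ht.
  destruct (MVT_gen g 0 t G) as [c [Hc E]].
  - intros x Hx. rewrite Rmin_right, Rmax_left in Hx by lra. apply Hd; lra.
  - intros x Hx. rewrite Rmin_right, Rmax_left in Hx by lra. eapply der_cont. apply Hd; lra.
  - rewrite Rmin_right, Rmax_left in Hc by lra.
    assert (0 <= (- G c) * (0 - t)) by (apply Rmult_le_pos; [generalize (HG c ltac:(lra)); lra|lra]).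
    lra.
Qed.

Lemma const_p (g : R -> R) : (forall t, 0 <= t -> is_derive g t 0) ->
  forall t, 0 <= t -> g t = g 0.
Proof.
  intros Hd t Ht.
  destruct (MVT_gen g 0 t (fun _ => 0)) as [c [Hc E]].
  - intros x Hx. rewrite Rmin_left, Rmax_right in Hx by lra. apply Hd; lra.
  - intros x Hx. rewrite Rmin_left, Rmax_right in Hx by lra. eapply der_cont. apply Hd; lra.
  - lra.
Qed.

Lemma const_m (g : R -> R) : (forall t, t <= 0 -> is_derive g t 0) ->
  forall t, t <= 0 -> g t = g 0.
Proof.
  intros Hd t Ht.
  destruct (MVT_gen g 0 t (fun _ => 0)) as [c [Hc E]].
  - intros x Hx. rewrite Rmin_right, Rmax_left in Hx by lra. apply Hd; lra.
  - intros x Hx. rewrite Rmin_right, Rmax_left in Hx by lra. eapply der_cont. apply Hd; lra.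
  - lra.
Qed.

Lemma lim_exp_p (g : R -> R) (C c L : R) : 0 < c -> 0 < C ->
  (forall t, Rabs (g t - L) <= C * exp (- (c * t))) -> is_lim g p_infty L.
Proof.
  intros Hc HC H. apply is_lim_spec. intros eps. simpl.
  assert (He : 0 < eps / (2 * C)) by (apply Rdiv_lt_0_compat; [apply cond_pos|lra]).
  exists (- ln (eps / (2 * C)) / c). intros t Ht.
  eapply Rle_lt_trans. apply H.
  assert (E : exp (- (c * t)) < eps / (2 * C)).
  { rewrite <- (exp_ln (eps / (2 * C))) by auto. apply exp_increasing.
    apply Rmult_lt_compat_l with (r := c) in Ht; auto.
    replace (c * (- ln (eps / (2 * C)) / c)) with (- ln (eps / (2 * C))) in Ht by (field; lra).
    lra. }
  apply Rmult_lt_compat_l with (r := C) in E; auto.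
  replace (C * (eps / (2 * C))) with (eps / 2) in E by (field; lra).
  generalize (cond_pos eps); lra.
Qed.

Lemma lim_exp_m (g : R -> R) (C c L : R) : 0 < c -> 0 < C ->
  (forall t, Rabs (g t - L) <= C * exp (c * t)) -> is_lim g m_infty L.
Proof.
  intros Hc HC H. apply is_lim_spec. intros eps. simpl.
  assert (He : 0 < eps / (2 * C)) by (apply Rdiv_lt_0_compat; [apply cond_pos|lra]).
  exists (ln (eps / (2 * C)) / c). intros t Ht.
  eapply Rle_lt_trans. apply H.
  assert (E : exp (c * t) < eps / (2 * C)).
  { rewrite <- (exp_ln (eps / (2 * C))) by auto. apply exp_increasing.
    apply Rmult_lt_compat_l with (r := c) in Ht; auto.
    replace (c * (ln (eps / (2 * C)) / c)) with (ln (eps / (2 * C))) in Ht by (field; lra).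
    lra. }
  apply Rmult_lt_compat_l with (r := C) in E; auto.
  replace (C * (eps / (2 * C))) with (eps / 2) in E by (field; lra).
  generalize (cond_pos eps); lra.
Qed.

Lemma div_lt (a b c : R) : 0 < c -> a < b * c -> a / c < b.
Proof. intros Hc H. apply Rmult_lt_reg_r with c; auto. unfold Rdiv.
  rewrite Rmult_assoc, Rinv_l, Rmult_1_r; lra. Qed.

Lemma part_ii (xi al : R) (h1 h2 h3 : R -> R -> R -> R) :
  0 < xi -> 0 < al ->
  (forall s y, h1 s y 0 = 0) ->
  (exists s y r : R -> R,
     is_solution al xi h1 h2 h3 m_infty p_infty s y r /\
     (forall t, 0 < y t < 2 * al / xi /\
                s t = 2 * al / xi * y t - (y t) ^ 2 /\ r t = 0) /\
     (forall y0, 0 < y0 < 2 * al / xi -> exists t, y t = y0) /\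
     is_lim s m_infty 0 /\ is_lim y m_infty 0 /\ is_lim r m_infty 0 /\
     is_lim s p_infty 0 /\ is_lim y p_infty (2 * al / xi) /\
     is_lim r p_infty 0).
Proof.
  intros Hxi Hal H1.
  set (k := al / xi).
  assert (Hk : 0 < k) by (unfold k; apply Rdiv_lt_0_compat; auto).
  set (Y := fun t => 2 * k / (1 + exp (- (2 * k * t)))).
  set (S := fun t => 2 * k * Y t - Y t ^ 2).
  assert (HY : forall t, 0 < Y t < 2 * k /\ 2 * k - Y t < 2 * k * exp (- (2 * k * t))
                 /\ Y t < 2 * k * exp (2 * k * t)).
  { intros t. assert (E := exp_pos (- (2 * k * t))).
    assert (EE : exp (- (2 * k * t)) * exp (2 * k * t) = 1).
    { rewrite <- exp_plus. replace (- (2 * k * t) + 2 * k * t) with 0 by ring. apply exp_0. }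
    assert (E2 := exp_pos (2 * k * t)).
    unfold Y. split; [split|split].
    - apply Rdiv_lt_0_compat; lra.
    - apply div_lt. lra. nra.
    - replace (2 * k - 2 * k / (1 + exp (- (2 * k * t)))) with
        (2 * k * exp (- (2 * k * t)) / (1 + exp (- (2 * k * t)))) by (field; lra).
      apply div_lt. lra.
      assert (0 < 2 * k * exp (- (2 * k * t)) * exp (- (2 * k * t))) by (apply Rmult_lt_0_compat; [apply Rmult_lt_0_compat|]; lra).
      lra.
    - apply div_lt. lra.
      replace (2 * k * exp (2 * k * t) * (1 + exp (- (2 * k * t)))) with (2 * k * exp (2 * k * t) + 2 * k)
        by (symmetry; transitivity (2 * k * exp (2 * k * t) + 2 * k * (exp (- (2 * k * t)) * exp (2 * k * t)));
            [ring | rewrite EE; ring]).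
      assert (0 < 2 * k * exp (2 * k * t)) by (apply Rmult_lt_0_compat; lra). lra. }
  exists S, Y, (fun _ => 0).
  split.
  { intros t _ _. assert (E := exp_pos (- (2 * k * t))).
    assert (DY : is_derive Y t (S t)).
    { unfold S, Y. auto_derive. lra. field. lra. }
    split; [|split].
    - unfold F_sigma. rewrite H1. fold k. unfold S at 1.
      eapply is_derive_eq.
      apply (is_derive_minus (fun t => 2 * k * Y t) (fun t => Y t ^ 2)).
      apply (is_derive_scal Y t (2 * k)). exact DY.
      apply (is_derive_pow Y 2 t (S t) DY).
      unfold minus, plus, opp, scal, mult; simpl. unfold mult; simpl.
      unfold S. ring.
    - unfold F_y. eapply is_derive_eq. exact DY. ring.
    - assert (E0 : F_rho al xi h3 (S t) (Y t) 0 = 0) by (unfold F_rho; ring).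
      rewrite E0. apply (is_derive_const (K:=R_AbsRing) (V:=R_NormedModule)). }
  split.
  { intros t. destruct (HY t) as [A _]. fold k. replace (2 * k) with (2 * al / xi) in A by (unfold k; field; lra).
    split; auto. split. unfold S. replace (2 * k) with (2 * al / xi) by (unfold k; field; lra). ring. auto. }
  split.
  { intros y0 Hy0. replace (2 * al / xi) with (2 * k) in Hy0 by (unfold k; field; lra).
    exists (- ln (2 * k / y0 - 1) / (2 * k)). unfold Y.
    assert (P : 0 < 2 * k / y0 - 1).
    { assert (1 < 2 * k / y0). { apply Rmult_lt_reg_r with y0. lra.
        unfold Rdiv. rewrite Rmult_assoc, Rinv_l by lra. lra. } lra. }
    replace (- (2 * k * (- ln (2 * k / y0 - 1) / (2 * k)))) with (ln (2 * k / y0 - 1)) by (field; lra).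
    rewrite exp_ln by auto. field. lra. }
  assert (Hk2 : 0 < 2 * k) by lra.
  assert (Hk4 : 0 < 2 * k * (2 * k)) by nra.
  split.
  { apply (lim_exp_m S (2 * k * (2 * k)) (2 * k) 0); auto. intros t.
    destruct (HY t) as [[A B] [C D]]. unfold S. rewrite Rminus_0_r.
    replace (2 * k * Y t - Y t ^ 2) with (Y t * (2 * k - Y t)) by ring.
    rewrite Rabs_right by (apply Rle_ge, Rmult_le_pos; lra).
    assert (Y t * (2 * k - Y t) <= Y t * (2 * k)) by (apply Rmult_le_compat_l; lra).
    assert (Y t * (2 * k) <= 2 * k * exp (2 * k * t) * (2 * k)) by (apply Rmult_le_compat_r; lra).
    lra. }
  split.
  { apply (lim_exp_m Y (2 * k) (2 * k) 0); auto. intros t.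
    destruct (HY t) as [[A B] [C D]]. rewrite Rminus_0_r, Rabs_right by lra. lra. }
  split. { apply is_lim_const. }
  split.
  { apply (lim_exp_p S (2 * k * (2 * k)) (2 * k) 0); auto. intros t.
    destruct (HY t) as [[A B] [C D]]. unfold S. rewrite Rminus_0_r.
    replace (2 * k * Y t - Y t ^ 2) with (Y t * (2 * k - Y t)) by ring.
    rewrite Rabs_right by (apply Rle_ge, Rmult_le_pos; lra).
    assert (Y t * (2 * k - Y t) <= 2 * k * (2 * k - Y t)) by (apply Rmult_le_compat_r; lra).
    assert (2 * k * (2 * k - Y t) <= 2 * k * (2 * k * exp (- (2 * k * t)))) by (apply Rmult_le_compat_l; lra).
    lra. }
  split.
  { replace (2 * al / xi) with (2 * k) by (unfold k; field; lra).
    apply (lim_exp_p Y (2 * k) (2 * k) (2 * k)); auto. intros t.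
    destruct (HY t) as [[A B] [C D]]. rewrite Rabs_left by lra. lra. }
  apply is_lim_const.
Qed.

Lemma h_small (h : R -> R -> R -> R) (a b c : R) : smooth3 h -> h a b c = 0 ->
  exists del, 0 < del /\ forall x y z, Rabs (x - a) < del -> Rabs (y - b) < del ->
    Rabs (z - c) < del -> -(1/2) < h x y z < 1/2.
Proof.
  intros S H0. destruct (cont3_ed h a b c (smooth_cont h S a b c) (1/2)) as [d [Hd H]]. lra.
  exists d. split; auto. intros x y z A B C. specialize (H x y z A B C).
  rewrite H0, Rminus_0_r in H. apply Rabs_def2 in H. lra.
Qed.

Lemma phi_cont (h : R -> R -> R -> R) (k c u : R) : smooth3 h ->
  continuity_pt (fun u => 2 * k * (1 + h 0 c u)) u.
Proof.
  intros S. apply continuity_pt_mult. apply continuity_pt_const; intro; auto.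
  apply continuity_pt_plus. apply continuity_pt_const; intro; auto.
  apply (cont_comp3 h (fun _ => 0) (fun _ => c) (fun t => t)).
  apply smooth_cont; auto.
  apply continuity_pt_const; intro; auto. apply continuity_pt_const; intro; auto.
  apply derivable_continuous_pt, derivable_pt_id.
Qed.

Lemma der0 (x : R) : is_derive (fun _ : R => 0) x 0.
Proof. apply (is_derive_const (K:=R_AbsRing) (V:=R_NormedModule)). Qed.

Lemma part_i (xi al : R) (h1 h2 h3 : R -> R -> R -> R) :
  0 < xi -> 0 < al ->
  smooth3 h1 -> smooth3 h2 -> smooth3 h3 ->
  (forall s y, h1 s y 0 = 0) -> (forall s y, h3 s y 0 = 0) ->
  (exists d0, 0 < d0 /\ forall d, 0 < d -> d <= d0 ->
     forall q1 q2 q3, in_U d 0 0 0 q1 q2 q3 ->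
       (loc_stable_set al xi h1 h2 h3 d 0 0 0 q1 q2 q3 <->
        q1 = 0 /\ q2 = 0)).
Proof.
  intros Hxi Hal S1 S2 S3 H1 H3.
  set (k := al / xi).
  assert (Hk : 0 < k) by (unfold k; apply Rdiv_lt_0_compat; auto).
  destruct (h_small h1 0 0 0 S1 (H1 0 0)) as [d1 [Hd1 B1]].
  destruct (h_small h3 0 0 0 S3 (H3 0 0)) as [d3 [Hd3 B3]].
  exists (Rmin (Rmin (k/2) (1/2)) (Rmin d1 d3)).
  split. { repeat apply Rmin_pos; lra. }
  intros d Hd Hdd.
  assert (Dk : d <= k/2) by (eapply Rle_trans; [exact Hdd|]; eapply Rle_trans; [apply Rmin_l|apply Rmin_l]).
  assert (Dh : d <= 1/2) by (eapply Rle_trans; [exact Hdd|]; eapply Rle_trans; [apply Rmin_l|apply Rmin_r]).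
  assert (D1 : d <= d1) by (eapply Rle_trans; [exact Hdd|]; eapply Rle_trans; [apply Rmin_r|apply Rmin_l]).
  assert (D3 : d <= d3) by (eapply Rle_trans; [exact Hdd|]; eapply Rle_trans; [apply Rmin_r|apply Rmin_r]).
  intros q1 q2 q3 HU. split.
  - intros [a [s [y [r [Ha [Hsol [E1 [E2 [E3 [HUt [Ls [Ly Lr]]]]]]]]]]]].
    assert (Hq1 : q1 = 0).
    { destruct (Req_dec q1 0) as [Z|Z]; auto. exfalso.
      assert (nz : forall t, 0 <= t -> s t <> 0).
      { intros t Ht Hst. apply Z. rewrite <- E1.
        apply (inv_sigma al xi h1 h2 h3 S1 S2 S3 (Finite a) p_infty s y r t Hsol); simpl; auto; lra. }
      assert (Hmono := mono_p s (fun t => F_sigma al xi h1 (s t) (y t) (r t))).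
      assert (s 0 <= 0).
      { apply (lim_p_ge s (s 0) 0); auto. apply Hmono.
        - intros t Ht. apply (Hsol t); simpl; auto; lra.
        - intros t Ht. destruct (HUt t Ht) as [P1 [P2 [P3 [P4 P5]]]].
          rewrite Rminus_0_r in P3, P4, P5.
          apply Rabs_def2 in P3. apply Rabs_def2 in P4. apply Rabs_def2 in P5.
          assert (Hs : 0 < s t) by (destruct P1 as [P1|P1]; auto; exfalso; apply (nz t Ht); auto).
          assert (f1 : -2 + r t * s t + r t ^ 2 < 0) by nra.
          assert (f2 : y t - al / xi < 0) by (fold k; lra).
          assert (f3 : 0 < 1 + h1 (s t) (y t) (r t)).
          { assert (-(1/2) < h1 (s t) (y t) (r t) < 1/2).
            { apply B1; rewrite Rminus_0_r; apply Rabs_def1; lra. } lra. }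
          unfold F_sigma.
          replace (s t * (-2 + r t * s t + r t ^ 2) * (y t - al / xi) * (1 + h1 (s t) (y t) (r t)))
            with (s t * ((-2 + r t * s t + r t ^ 2) * (y t - al / xi)) * (1 + h1 (s t) (y t) (r t))) by ring.
          apply Rmult_le_pos; [apply Rmult_le_pos|]; nra. }
      destruct HU as [P _]. rewrite E1 in H. lra. }
    split; auto.
    assert (s0 : forall t, a < t -> s t = 0).
    { intros t Ht. apply (inv_sigma al xi h1 h2 h3 S1 S2 S3 (Finite a) p_infty s y r 0 Hsol);
        simpl; auto; lra. }
    assert (Hy : forall t, 0 <= t -> y t = y 0).
    { apply const_p. intros t Ht. destruct (Hsol t) as [_ [Dy _]]; simpl; auto. lra.
      eapply is_derive_eq. exact Dy. unfold F_y. rewrite s0 by lra. ring. }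
    rewrite <- E2. apply (lim_p_eq y (y 0) 0); auto.
  - intros [-> ->]. destruct HU as [_ [Hq3 [_ [_ Hq3d]]]].
    rewrite Rminus_0_r in Hq3d. apply Rabs_def2 in Hq3d.
    destruct Hq3 as [Hq3|Hq3].
    + set (phi := fun u => 2 * k * (1 + h3 0 0 u)).
      destruct (ode_decay phi d q3 k (3 * k)) as [a [rho [Ha [R0 [Rd [Rb Rl]]]]]]; auto. lra.
      { intros u Hu. assert (-(1/2) < h3 0 0 u < 1/2).
        { apply B3; rewrite ?Rminus_0_r, ?Rabs_R0; try lra. apply Rabs_def1; lra. }
        unfold phi. nra. }
      { intros u Hu. apply phi_cont; auto. }
      exists a, (fun _ => 0), (fun _ => 0), rho.
      split; auto. split.
      { intros t Ht _. simpl in Ht. split; [|split].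
        - replace (F_sigma al xi h1 0 0 (rho t)) with 0 by (unfold F_sigma; ring). apply der0.
        - replace (F_y al xi h2 0 0 (rho t)) with 0 by (unfold F_y; ring). apply der0.
        - eapply is_derive_eq. apply Rd; auto. unfold F_rho, phi, k. ring. }
      split; auto. split; auto. split; auto. split.
      { intros t Ht. destruct (Rb t Ht). unfold in_U. rewrite !Rminus_0_r, Rabs_R0.
        split. lra. split. lra. split. lra. split. lra. rewrite Rabs_right; lra. }
      split. apply is_lim_const. split. apply is_lim_const. auto.
    + subst q3. exists (-1), (fun _ => 0), (fun _ => 0), (fun _ => 0).
      split. lra. split.
      { intros t Ht _. split; [|split].
        - replace (F_sigma al xi h1 0 0 0) with 0 by (unfold F_sigma; ring). apply der0.
        - replace (F_y al xi h2 0 0 0) with 0 by (unfold F_y; ring). apply der0.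
        - replace (F_rho al xi h3 0 0 0) with 0 by (unfold F_rho; ring). apply der0. }
      split; auto. split; auto. split; auto. split.
      { intros t Ht. unfold in_U. rewrite !Rminus_0_r, Rabs_R0. lra. }
      split. apply is_lim_const. split; apply is_lim_const.
Qed.

Lemma lim_flip (g : R -> R) (L : R) : is_lim g p_infty L -> is_lim (fun t => g (- t)) m_infty L.
Proof.
  intros H. apply is_lim_spec in H. apply is_lim_spec. intros eps.
  destruct (H eps) as [M HM]. exists (- M). intros t Ht. apply HM. lra.
Qed.

Lemma part_iii (xi al : R) (h1 h2 h3 : R -> R -> R -> R) :
  0 < xi -> 0 < al ->
  smooth3 h1 -> smooth3 h2 -> smooth3 h3 ->
  (forall s y, h1 s y 0 = 0) -> (forall s y, h3 s y 0 = 0) ->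
  (exists d0, 0 < d0 /\ forall d, 0 < d -> d <= d0 ->
     forall q1 q2 q3, in_U d 0 (2 * al / xi) 0 q1 q2 q3 ->
       (loc_unstable_set al xi h1 h2 h3 d 0 (2 * al / xi) 0 q1 q2 q3 <->
        q1 = 0 /\ q2 = 2 * al / xi)).
Proof.
  intros Hxi Hal S1 S2 S3 H1 H3.
  set (k := al / xi).
  assert (Hk : 0 < k) by (unfold k; apply Rdiv_lt_0_compat; auto).
  assert (K2 : 2 * al / xi = 2 * k) by (unfold k, Rdiv; ring).
  destruct (h_small h1 0 (2 * al / xi) 0 S1 (H1 0 _)) as [d1 [Hd1 B1]].
  destruct (h_small h3 0 (2 * al / xi) 0 S3 (H3 0 _)) as [d3 [Hd3 B3]].
  exists (Rmin (Rmin (k/2) (1/2)) (Rmin d1 d3)).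
  split. { repeat apply Rmin_pos; lra. }
  intros d Hd Hdd.
  assert (Dk : d <= k/2) by (eapply Rle_trans; [exact Hdd|]; eapply Rle_trans; [apply Rmin_l|apply Rmin_l]).
  assert (Dh : d <= 1/2) by (eapply Rle_trans; [exact Hdd|]; eapply Rle_trans; [apply Rmin_l|apply Rmin_r]).
  assert (D1 : d <= d1) by (eapply Rle_trans; [exact Hdd|]; eapply Rle_trans; [apply Rmin_r|apply Rmin_l]).
  assert (D3 : d <= d3) by (eapply Rle_trans; [exact Hdd|]; eapply Rle_trans; [apply Rmin_r|apply Rmin_r]).
  intros q1 q2 q3 HU. split.
  - intros [b [s [y [r [Hb [Hsol [E1 [E2 [E3 [HUt [Ls [Ly Lr]]]]]]]]]]]].
    assert (Hq1 : q1 = 0).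
    { destruct (Req_dec q1 0) as [Z|Z]; auto. exfalso.
      assert (nz : forall t, t <= 0 -> s t <> 0).
      { intros t Ht Hst. apply Z. rewrite <- E1.
        apply (inv_sigma al xi h1 h2 h3 S1 S2 S3 m_infty (Finite b) s y r t Hsol); simpl; auto; lra. }
      assert (Hmono := mono_m s (fun t => F_sigma al xi h1 (s t) (y t) (r t))).
      assert (s 0 <= 0).
      { apply (lim_m_ge s (s 0) 0); auto. apply Hmono.
        - intros t Ht. apply (Hsol t); simpl; auto; lra.
        - intros t Ht. destruct (HUt t Ht) as [P1 [P2 [P3 [P4 P5]]]].
          rewrite Rminus_0_r in P3, P5.
          apply Rabs_def2 in P3. apply Rabs_def2 in P4. apply Rabs_def2 in P5.
          assert (Hs : 0 < s t) by (destruct P1 as [P1|P1]; auto; exfalso; apply (nz t Ht); auto).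
          assert (f1 : -2 + r t * s t + r t ^ 2 < 0) by nra.
          assert (f2 : 0 < y t - al / xi) by (rewrite K2 in P4; fold k; lra).
          assert (f3 : 0 < 1 + h1 (s t) (y t) (r t)).
          { assert (-(1/2) < h1 (s t) (y t) (r t) < 1/2).
            { apply B1; rewrite ?Rminus_0_r; apply Rabs_def1; lra. } lra. }
          unfold F_sigma.
          replace (s t * (-2 + r t * s t + r t ^ 2) * (y t - al / xi) * (1 + h1 (s t) (y t) (r t)))
            with (- (s t * (- (-2 + r t * s t + r t ^ 2) * (y t - al / xi)) * (1 + h1 (s t) (y t) (r t)))) by ring.
          assert (0 <= s t * (- (-2 + r t * s t + r t ^ 2) * (y t - al / xi)) * (1 + h1 (s t) (y t) (r t))).
          { apply Rmult_le_pos; [apply Rmult_le_pos|]; nra. }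
          lra. }
      destruct HU as [P _]. rewrite E1 in H. lra. }
    split; auto.
    assert (s0 : forall t, t < b -> s t = 0).
    { intros t Ht. apply (inv_sigma al xi h1 h2 h3 S1 S2 S3 m_infty (Finite b) s y r 0 Hsol);
        simpl; auto; lra. }
    assert (Hy : forall t, t <= 0 -> y t = y 0).
    { apply const_m. intros t Ht. destruct (Hsol t) as [_ [Dy _]]; simpl; auto. lra.
      eapply is_derive_eq. exact Dy. unfold F_y. rewrite s0 by lra. ring. }
    rewrite <- E2. apply (lim_m_eq y (y 0) (2 * al / xi)); auto.
  - intros [-> ->]. destruct HU as [_ [Hq3 [_ [_ Hq3d]]]].
    rewrite Rminus_0_r in Hq3d. apply Rabs_def2 in Hq3d.
    destruct Hq3 as [Hq3|Hq3].
    + set (phi := fun u => 2 * k * (1 + h3 0 (2 * al / xi) u)).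
      destruct (ode_decay phi d q3 k (3 * k)) as [a [rho [Ha [R0 [Rd [Rb Rl]]]]]]; auto. lra.
      { intros u Hu. assert (-(1/2) < h3 0 (2 * al / xi) u < 1/2).
        { apply B3; rewrite ?Rminus_0_r, ?Rminus_diag, ?Rabs_R0; try lra. apply Rabs_def1; lra. }
        unfold phi. nra. }
      { intros u Hu. apply phi_cont; auto. }
      exists (- a), (fun _ => 0), (fun _ => 2 * al / xi), (fun t => rho (- t)).
      split. lra. split.
      { intros t _ Ht. simpl in Ht. split; [|split].
        - replace (F_sigma al xi h1 0 (2 * al / xi) (rho (- t))) with 0 by (unfold F_sigma; ring). apply der0.
        - replace (F_y al xi h2 0 (2 * al / xi) (rho (- t))) with 0 by (unfold F_y; ring).
          apply (is_derive_const (K:=R_AbsRing) (V:=R_NormedModule)).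
        - eapply is_derive_eq.
          apply (is_derive_comp rho (fun t => - t) t (- (rho (- t) * phi (rho (- t)))) (-1)).
          apply Rd; lra. auto_derive; auto; try ring.
          unfold scal; simpl; unfold mult; simpl. unfold F_rho, phi, k. unfold Rdiv. ring. }
      split. auto. split. auto. split. rewrite Ropp_0; auto. split.
      { intros t Ht. destruct (Rb (- t)) as [A B]. lra. unfold in_U. rewrite !Rminus_0_r, Rminus_diag, Rabs_R0.
        split. lra. split. lra. split. lra. split. lra. rewrite Rabs_right; lra. }
      split. apply is_lim_const. split. apply is_lim_const. apply lim_flip; auto.
    + subst q3. exists 1, (fun _ => 0), (fun _ => 2 * al / xi), (fun _ => 0).
      split. lra. split.
      { intros t _ _. split; [|split].
        - replace (F_sigma al xi h1 0 (2 * al / xi) 0) with 0 by (unfold F_sigma; ring). apply der0.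
        - replace (F_y al xi h2 0 (2 * al / xi) 0) with 0 by (unfold F_y; ring).
          apply (is_derive_const (K:=R_AbsRing) (V:=R_NormedModule)).
        - replace (F_rho al xi h3 0 (2 * al / xi) 0) with 0 by (unfold F_rho; ring). apply der0. }
      split; auto. split; auto. split; auto. split.
      { intros t Ht. unfold in_U. rewrite !Rminus_0_r, Rminus_diag, Rabs_R0. lra. }
      split. apply is_lim_const. split; apply is_lim_const.
Qed.

Theorem lemma5 (xi al : R) (h1 h2 h3 : R -> R -> R -> R) :
  0 < xi -> 0 < al ->
  smooth3 h1 -> smooth3 h2 -> smooth3 h3 ->
  (forall s y, h1 s y 0 = 0) -> (forall s y, h2 s y 0 = 0) ->
  (forall s y, h3 s y 0 = 0) ->
  (* the plane {rho = 0} is invariant *)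
  (forall (a b : Rbar) (s y r : R -> R) (t0 : R),
     is_solution al xi h1 h2 h3 a b s y r ->
     Rbar_lt a t0 -> Rbar_lt t0 b -> r t0 = 0 ->
     forall t : R, Rbar_lt a t -> Rbar_lt t b -> r t = 0) /\
  (* the plane {sigma = 0} is invariant *)
  (forall (a b : Rbar) (s y r : R -> R) (t0 : R),
     is_solution al xi h1 h2 h3 a b s y r ->
     Rbar_lt a t0 -> Rbar_lt t0 b -> s t0 = 0 ->
     forall t : R, Rbar_lt a t -> Rbar_lt t b -> s t = 0) /\
  (* {rho = sigma = 0} is a line of fixed points *)
  (forall y, F_sigma al xi h1 0 y 0 = 0 /\ F_y al xi h2 0 y 0 = 0 /\
             F_rho al xi h3 0 y 0 = 0) /\
  (* (i) strong stable manifold of (0,0,0) *)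
  (exists d0, 0 < d0 /\ forall d, 0 < d -> d <= d0 ->
     forall q1 q2 q3, in_U d 0 0 0 q1 q2 q3 ->
       (loc_stable_set al xi h1 h2 h3 d 0 0 0 q1 q2 q3 <->
        q1 = 0 /\ q2 = 0)) /\
  (* (ii) heteroclinic connection gamma^{2,4} *)
  (exists s y r : R -> R,
     is_solution al xi h1 h2 h3 m_infty p_infty s y r /\
     (forall t, 0 < y t < 2 * al / xi /\
                s t = 2 * al / xi * y t - (y t) ^ 2 /\ r t = 0) /\
     (forall y0, 0 < y0 < 2 * al / xi -> exists t, y t = y0) /\
     is_lim s m_infty 0 /\ is_lim y m_infty 0 /\ is_lim r m_infty 0 /\
     is_lim s p_infty 0 /\ is_lim y p_infty (2 * al / xi) /\
     is_lim r p_infty 0) /\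
  (* (iii) strong unstable manifold of (0, 2 al/xi, 0) *)
  (exists d0, 0 < d0 /\ forall d, 0 < d -> d <= d0 ->
     forall q1 q2 q3, in_U d 0 (2 * al / xi) 0 q1 q2 q3 ->
       (loc_unstable_set al xi h1 h2 h3 d 0 (2 * al / xi) 0 q1 q2 q3 <->
        q1 = 0 /\ q2 = 2 * al / xi)).
Proof.
  intros Hxi Hal S1 S2 S3 H1 H2 H3.
  split. exact (inv_rho al xi h1 h2 h3 S1 S2 S3).
  split. exact (inv_sigma al xi h1 h2 h3 S1 S2 S3).
  split. { intros y. unfold F_sigma, F_y, F_rho. split; [|split]; ring. }
  split. apply part_i; auto.
  split. apply part_ii; auto.
  apply part_iii; auto.
Qed.
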